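(* Let $\mathcal{C}$ be a d-category and $X$ a $\mathcal{C}$-automaton. A track object $\Gamma$ belongs to $\mathrm{Lang}(X)$ if and only if $\Gamma\cong\widehat{\pi_X\circ\alpha}$ (as $\mathcal{C}$-automata) for some accepting path $\alpha$ in $X$. That is, $\mathrm{Lang}(X)=\{\widehat{\pi_X\circ\alpha}\mid\alpha\text{ accepting path in }X\}$ up to isomorphism.
   Context: A d-category is a small category $\mathcal{C}$ with wide subcategories $\mathcal{C}^+$ (formorphisms) and $\mathcal{C}^-$ (backmorphisms) such that an invertible $\varphi$ is in $\mathcal{C}^+$ iff $\varphi^{-1}\in\mathcal{C}^-$; d-functors preserve both. A $\mathcal{C}$-presheaf is a functor $X:\mathcal{C}^{op}\to\mathbf{Set}$; $\mathsf{E}X$ is its category of elements (objects $(U,x)$, $x\in X[U]$; morphisms $(V,y)\to(U,x)$ the $\varphi:V\to U$ with $X[\varphi](x)=y$), with projection $\pi_X$ and d-structure: a morphism is a for-/backmorphism iff its image under $\pi_X$ is. A $\mathcal{C}$-automaton is a presheaf $X$ with sets $\bot_X,\top_X$ of elements (start, accept); morphisms of automata are presheaf maps preserving them. A linear category is a bipointed d-category isomorphic to a finite (possibly empty) concatenation (gluing $\top$ to $\bot$) of $\mathbf S$ (formorphism $\bot\to\top$), $\mathbf T$ (backmorphism $\top\to\bot$), $\mathbf I$ (inverse pair). A path in a d-category $\mathcal D$ is a d-functor $\omega:\mathcal I\to\mathcal D$ from a linear category; a path in $X$ is a path in $\mathsf{E}X$, accepting if $\alpha(\bot_{\mathcal I})\in\bot_X$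 and $\alpha(\top_{\mathcal I})\in\top_X$. The track object of a path $\omega$ in $\mathcal{C}$ is $\widehat\omega=\operatorname{colim}_{i}\mathcal{C}(-,\omega(i))$ with single start element the image of $\mathrm{id}_{\omega(\bot)}$ and single accept element the image of $\mathrm{id}_{\omega(\top)}$; a track object is an automaton isomorphic to some $\widehat\omega$. $\mathrm{Lang}(X)$ is the class of track objects $\Gamma$ admitting a morphism of $\mathcal{C}$-automata $\Gamma\to X$. *)

(* Defs.v *)
From Stdlib Require Import Arith Lia List ProofIrrelevance ClassicalEpsilon
  FunctionalExtensionality PropExtensionality Relation_Operators.
Set Implicit Arguments.
Unset Strict Implicit.

Record Cat := {
  ob : Type;
  hom : ob -> ob -> Type;
  idc : forall a, hom a a;
  cmp : forall a b c, hom b c -> hom a b -> hom a c;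
  cmp_id_l : forall a b (f : hom a b), cmp (idc b) f = f;
  cmp_id_r : forall a b (f : hom a b), cmp f (idc a) = f;
  cmp_assoc : forall a b c d (h : hom c d) (g : hom b c) (f : hom a b),
      cmp h (cmp g f) = cmp (cmp h g) f }.
Arguments idc {_} _.
Arguments cmp {_ _ _ _} _ _.
Arguments hom {_} _ _.

Record DCat := {
  dcat :> Cat;
  fwd : forall a b : ob dcat, hom a b -> Prop;
  bwd : forall a b : ob dcat, hom a b -> Prop;
  fwd_id : forall a, fwd (idc a);
  fwd_cmp : forall a b c (g : hom b c) (f : hom a b),
      fwd g -> fwd f -> fwd (cmp g f);
  bwd_id : forall a, bwd (idc a);
  bwd_cmp : forall a b c (g : hom b c) (f : hom a b),
      bwd g -> bwd f -> bwd (cmp g f);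
  d_inv : forall a b (f : hom a b) (g : hom b a),
      cmp g f = idc a -> cmp f g = idc b -> (fwd f <-> bwd g) }.
Arguments fwd {_ _ _} _.
Arguments bwd {_ _ _} _.

Record Functor (C D : Cat) := {
  fob : ob C -> ob D;
  fmap : forall a b, @hom C a b -> @hom D (fob a) (fob b);
  fmap_id : forall a, fmap (idc a) = idc (fob a);
  fmap_cmp : forall a b c (g : @hom C b c) (f : @hom C a b),
      fmap (cmp g f) = cmp (fmap g) (fmap f) }.
Arguments fob {C D} _ _.
Arguments fmap {C D} _ {a b} _.

Record DFunctor (C D : DCat) := {
  dfun :> Functor C D;
  dfun_fwd : forall a b (f : @hom C a b), fwd f -> fwd (fmap dfun f);
  dfun_bwd : forall a b (f : @hom C a b), bwd f -> bwd (fmap dfun f) }.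

Definition fcomp (C D E : Cat) (G : Functor D E) (F : Functor C D) : Functor C E.
Proof.
  refine {| fob := fun a => fob G (fob F a);
            fmap := fun a b f => fmap G (fmap F f) |}.
  - intro a. rewrite (fmap_id F), (fmap_id G). reflexivity.
  - intros a b c g f. rewrite (fmap_cmp F), (fmap_cmp G). reflexivity.
Defined.

Definition dfcomp (C D E : DCat) (G : DFunctor D E) (F : DFunctor C D) : DFunctor C E.
Proof.
  refine {| dfun := fcomp G F |}.
  - intros a b f H. apply (dfun_fwd G). apply (dfun_fwd F). exact H.
  - intros a b f H. apply (dfun_bwd G). apply (dfun_bwd F). exact H.
Defined.

(* A word over {S, T, I}; the concatenation of the corresponding pieces has
   objects 0..n (n = length of the word), bottom 0, top n.  It is thin: there is
   a (unique) morphism i -> j iff j >= i and all steps in [i,j) are S or I, or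
   j <= i and all steps in [j,i) are T or I.  Formorphisms are those with
   i <= j, backmorphisms those with j <= i. *)
Inductive Step := sS | sT | sI.

Definition fstep (s : Step) : Prop := match s with sS | sI => True | sT => False end.
Definition bstep (s : Step) : Prop := match s with sT | sI => True | sS => False end.

Definition reach (w : list Step) (i j : nat) : Prop :=
  (i <= j /\ forall k, i <= k < j -> fstep (nth k w sI)) \/
  (j <= i /\ forall k, j <= k < i -> bstep (nth k w sI)).

Lemma reach_refl w i : reach w i i.
Proof. left. split; [lia | intros k Hk; lia]. Qed.

Lemma reach_trans w i j k : reach w i j -> reach w j k -> reach w i k.
Proof.
  unfold reach; intros [[H1 F1]|[H1 B1]] [[H2 F2]|[H2 B2]].
  - left; split; [lia|]. intros m Hm. destruct (Nat.lt_ge_cases m j).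
    + apply F1; lia.
    + apply F2; lia.
  - destruct (Nat.le_ge_cases i k).
    + left; split; [lia|]. intros m Hm; apply F1; lia.
    + right; split; [lia|]. intros m Hm; apply B2; lia.
  - destruct (Nat.le_ge_cases i k).
    + left; split; [lia|]. intros m Hm; apply F2; lia.
    + right; split; [lia|]. intros m Hm; apply B1; lia.
  - right; split; [lia|]. intros m Hm. destruct (Nat.lt_ge_cases m j).
    + apply B2; lia.
    + apply B1; lia.
Qed.

Definition LinOb (w : list Step) := {i : nat | i <= length w}.

Definition LinCat (w : list Step) : Cat.
Proof.
  refine {| ob := LinOb w;
            hom := fun a b => reach w (proj1_sig a) (proj1_sig b);
            idc := fun a => reach_refl w (proj1_sig a);
            cmp := fun a b c g f => reach_trans f g |};
  intros; apply proof_irrelevance.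
Defined.

Definition LinD (w : list Step) : DCat.
Proof.
  refine {| dcat := LinCat w;
            fwd := fun a b _ => proj1_sig a <= proj1_sig b;
            bwd := fun a b _ => proj1_sig b <= proj1_sig a |};
  simpl; intros; try lia; tauto.
Defined.

Definition lbot (w : list Step) : ob (LinD w) :=
  exist (fun i => i <= length w) 0 (Nat.le_0_l _).
Definition ltop (w : list Step) : ob (LinD w) :=
  exist (fun i => i <= length w) (length w) (Nat.le_refl _).

Record Path (D : DCat) := { pword : list Step; pfun : DFunctor (LinD pword) D }.
Arguments pword {D} _.
Arguments pfun {D} _.

Definition pbot (D : DCat) (p : Path D) : ob D := fob (pfun p) (lbot (pword p)).
Definition ptop (D : DCat) (p : Path D) : ob D := fob (pfun p) (ltop (pword p)).

Record Presheaf (C : Cat) := {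
  ps : ob C -> Type;
  pact : forall U V, @hom C V U -> ps U -> ps V;
  pact_id : forall U (x : ps U), pact (idc U) x = x;
  pact_cmp : forall U V W (f : @hom C V U) (g : @hom C W V) (x : ps U),
      pact (cmp f g) x = pact g (pact f x) }.
Arguments ps {C} _ _.
Arguments pact {C} _ {U V} _ _.

Definition Elt (C : Cat) (X : Presheaf C) := {U : ob C & ps X U}.

Record Automaton (C : Cat) := {
  apsh :> Presheaf C;
  astart : Elt apsh -> Prop;
  aacc : Elt apsh -> Prop }.
Arguments astart {C} _ _.
Arguments aacc {C} _ _.

Record PMap (C : Cat) (X Y : Presheaf C) := {
  pm : forall U, ps X U -> ps Y U;
  pm_nat : forall U V (f : @hom C V U) (x : ps X U),
      pm (pact X f x) = pact Y f (pm x) }.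
Arguments pm {C X Y} _ _ _.

Definition pm_elt (C : Cat) (X Y : Presheaf C) (m : PMap X Y) (e : Elt X) : Elt Y :=
  existT _ (projT1 e) (pm m (projT1 e) (projT2 e)).

Definition is_amorph (C : Cat) (X Y : Automaton C) (m : PMap X Y) : Prop :=
  (forall e, astart X e -> astart Y (pm_elt m e)) /\
  (forall e, aacc X e -> aacc Y (pm_elt m e)).

Definition aiso (C : Cat) (X Y : Automaton C) : Prop :=
  exists (m : PMap X Y) (m' : PMap Y X),
    is_amorph m /\ is_amorph m' /\
    (forall U x, pm m' U (pm m U x) = x) /\ (forall U y, pm m U (pm m' U y) = y).

Lemma sig_eq_pi (A : Type) (P : A -> Prop) (a b : {x : A | P x}) :
  proj1_sig a = proj1_sig b -> a = b.
Proof.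
  destruct a as [a Ha], b as [b Hb]; simpl; intros ->.
  f_equal; apply proof_irrelevance.
Qed.

Definition ElHom (C : Cat) (X : Presheaf C) (e e' : Elt X) :=
  {phi : @hom C (projT1 e) (projT1 e') | pact X phi (projT2 e') = projT2 e}.

Definition el_id (C : Cat) (X : Presheaf C) (e : Elt X) : ElHom e e :=
  exist (fun phi => pact X phi (projT2 e) = projT2 e) (idc (projT1 e))
        (pact_id _).

Definition el_cmp (C : Cat) (X : Presheaf C) (e1 e2 e3 : Elt X)
  (g : ElHom e2 e3) (f : ElHom e1 e2) : ElHom e1 e3.
Proof.
  exists (cmp (proj1_sig g) (proj1_sig f)).
  rewrite pact_cmp, (proj2_sig g), (proj2_sig f). reflexivity.
Defined.

Definition ElCat (C : Cat) (X : Presheaf C) : Cat.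
Proof.
  refine {| ob := Elt X; hom := @ElHom C X; idc := @el_id C X; cmp := @el_cmp C X |}.
  - intros; apply sig_eq_pi; simpl; apply cmp_id_l.
  - intros; apply sig_eq_pi; simpl; apply cmp_id_r.
  - intros; apply sig_eq_pi; simpl; apply cmp_assoc.
Defined.

Definition EX (C : DCat) (X : Presheaf C) : DCat.
Proof.
  refine {| dcat := ElCat X;
            fwd := fun e e' phi => fwd (proj1_sig phi);
            bwd := fun e e' phi => bwd (proj1_sig phi) |}.
  - intros; apply fwd_id.
  - intros a b c g f Hg Hf; apply (fwd_cmp Hg Hf).
  - intros; apply bwd_id.
  - intros a b c g f Hg Hf; apply (bwd_cmp Hg Hf).
  - intros a b f g H1 H2. apply (d_inv (d:=C)).
    + exact (f_equal (@proj1_sig _ _) H1).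
    + exact (f_equal (@proj1_sig _ _) H2).
Defined.

Definition piF (C : DCat) (X : Presheaf C) : Functor (EX X) C.
Proof.
  refine (@Build_Functor (EX X) C (fun e : Elt X => projT1 e)
            (fun e e' (phi : @ElHom C X e e') => proj1_sig phi) _ _);
  intros; reflexivity.
Defined.

Definition piX (C : DCat) (X : Presheaf C) : DFunctor (EX X) C.
Proof.
  refine (@Build_DFunctor (EX X) C (piF X) _ _); simpl; intros; assumption.
Defined.

Definition ppush (C : DCat) (X : Presheaf C) (alpha : Path (EX X)) : Path C :=
  {| pword := pword alpha; pfun := dfcomp (piX X) (pfun alpha) |}.

Definition accepting (C : DCat) (X : Automaton C) (alpha : Path (EX X)) : Prop :=
  astart X (pbot alpha) /\ aacc X (ptop alpha).

Definition eqv (A : Type) (R : A -> A -> Prop) := clos_refl_sym_trans A R.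
Definition quot (A : Type) (R : A -> A -> Prop) :=
  {P : A -> Prop | exists a, P = eqv R a}.
Definition cls (A : Type) (R : A -> A -> Prop) (a : A) : quot R :=
  exist _ (eqv R a) (ex_intro _ a eq_refl).

Definition qrepr (A : Type) (R : A -> A -> Prop) (q : quot R) : A :=
  proj1_sig (constructive_indefinite_description _ (proj2_sig q)).

Lemma qrepr_spec (A : Type) (R : A -> A -> Prop) (q : quot R) : cls R (qrepr q) = q.
Proof.
  unfold qrepr. destruct (constructive_indefinite_description _ _) as [a Ha].
  simpl. apply sig_eq_pi. simpl. symmetry. exact Ha.
Qed.

Lemma cls_eqv (A : Type) (R : A -> A -> Prop) (a b : A) :
  cls R a = cls R b -> eqv R a b.
Proof.
  intro H. apply (f_equal (@proj1_sig _ _)) in H. simpl in H.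
  assert (Hb : eqv R b b) by apply rst_refl.
  rewrite <- H in Hb. exact Hb.
Qed.

Definition qlift (A B : Type) (R : A -> A -> Prop) (f : A -> B) (q : quot R) : B :=
  f (qrepr q).

Lemma qlift_cls (A B : Type) (R : A -> A -> Prop) (f : A -> B) :
  (forall a b, R a b -> f a = f b) -> forall a, qlift f (cls R a) = f a.
Proof.
  intros Hf a. unfold qlift. pose proof (cls_eqv (qrepr_spec (cls R a))) as H.
  induction H; auto. congruence.
Qed.

Lemma cls_surj (A : Type) (R : A -> A -> Prop) (q : quot R) : exists a, q = cls R a.
Proof. exists (qrepr q). symmetry. apply qrepr_spec. Qed.

Lemma cls_step (A : Type) (R : A -> A -> Prop) (a b : A) : R a b -> cls R a = cls R b.
Proof.
  intro H. apply sig_eq_pi; simpl.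
  apply functional_extensionality; intro x. apply propositional_extensionality.
  split; intro Hx.
  - apply rst_trans with a; [apply rst_sym, rst_step, H | exact Hx].
  - apply rst_trans with b; [apply rst_step, H | exact Hx].
Qed.

(* hat omega = colim_i C(-, omega(i)), computed pointwise in Set:
   at U, the quotient of  sum_i C(U, omega i)  by the equivalence generated by
   (i, f) ~ (j, omega(g) o f)  for g : i -> j in the linear category. *)
Definition TrA (C : DCat) (om : Path C) (U : ob C) :=
  {i : ob (LinD (pword om)) & @hom C U (fob (pfun om) i)}.

Definition TrR (C : DCat) (om : Path C) (U : ob C) (p q : TrA om U) : Prop :=
  exists g : @hom (LinD (pword om)) (projT1 p) (projT1 q),
    projT2 q = cmp (fmap (pfun om) g) (projT2 p).

Definition TrT (C : DCat) (om : Path C) (U : ob C) := quot (@TrR C om U).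

Definition tr_act_rep (C : DCat) (om : Path C) (U V : ob C) (phi : @hom C V U)
  (p : TrA om U) : TrT om V :=
  cls (@TrR C om V) (existT _ (projT1 p) (cmp (projT2 p) phi)).

Lemma tr_act_rep_ok (C : DCat) (om : Path C) (U V : ob C) (phi : @hom C V U) :
  forall p q : TrA om U, TrR p q -> tr_act_rep phi p = tr_act_rep phi q.
Proof.
  intros [i f] [j f'] [g Hg]; simpl in *. unfold tr_act_rep; simpl.
  apply cls_step. exists g; simpl. rewrite Hg. symmetry. apply cmp_assoc.
Qed.

Definition tr_act (C : DCat) (om : Path C) (U V : ob C) (phi : @hom C V U)
  (q : TrT om U) : TrT om V := qlift (tr_act_rep phi) q.

Definition track_psh (C : DCat) (om : Path C) : Presheaf C.
Proof.
  refine {| ps := TrT om; pact := @tr_act C om |}.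
  - intros U q. destruct (cls_surj q) as [[i f] ->].
    unfold tr_act. rewrite qlift_cls by apply tr_act_rep_ok.
    unfold tr_act_rep; simpl. rewrite cmp_id_r. reflexivity.
  - intros U V W f g q. destruct (cls_surj q) as [[i h] ->].
    unfold tr_act. rewrite !qlift_cls by apply tr_act_rep_ok.
    unfold tr_act_rep; simpl. rewrite qlift_cls by apply tr_act_rep_ok.
    unfold tr_act_rep; simpl. rewrite cmp_assoc. reflexivity.
Defined.

Definition tr_elt (C : DCat) (om : Path C) (i : ob (LinD (pword om))) : Elt (track_psh om) :=
  existT (ps (track_psh om)) (fob (pfun om) i)
    (cls (@TrR C om (fob (pfun om) i)) (existT _ i (idc (fob (pfun om) i)))).

Definition track (C : DCat) (om : Path C) : Automaton C :=
  {| apsh := track_psh om;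
     astart := fun e => e = @tr_elt C om (lbot (pword om));
     aacc := fun e => e = @tr_elt C om (ltop (pword om)) |}.

Definition is_track_object (C : DCat) (G : Automaton C) : Prop :=
  exists om : Path C, aiso G (track om).

Definition Lang (C : DCat) (X : Automaton C) (G : Automaton C) : Prop :=
  is_track_object G /\ exists m : PMap G X, is_amorph m.
Arguments accepting {C} X alpha.
Arguments Lang {C} X G.
Arguments ppush {C X} alpha.
Arguments track {C} om.

(* Main.v *)
Require Import Defs.
From Stdlib Require Import ProofIrrelevance Relation_Operators.
Set Implicit Arguments.

Section S.
Variables (C : DCat) (X : Automaton C) (G : Automaton C) (om : Path C)
  (a : PMap (track om) G) (b : PMap G X).

Definition xi (i : ob (LinD (pword om))) : ps X (fob (pfun om) i) :=
  pm b _ (pm a _ (cls (@TrR C om (fob (pfun om) i)) (existT (fun k => @hom C (fob (pfun om) i) (fob (pfun om) k)) i (idc (fob (pfun om) i))))).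

Lemma xi_nat i j (g : @hom (LinD (pword om)) i j) :
  pact X (fmap (pfun om) g) (xi j) = xi i.
Proof.
  unfold xi. rewrite <- !pm_nat. f_equal. f_equal.
  change (tr_act (fmap (pfun om) g) (cls (@TrR C om (fob (pfun om) j)) (existT (fun k => @hom C (fob (pfun om) j) (fob (pfun om) k)) j (idc (fob (pfun om) j)))) =
          cls (@TrR C om (fob (pfun om) i)) (existT (fun k => @hom C (fob (pfun om) i) (fob (pfun om) k)) i (idc (fob (pfun om) i)))).
  unfold tr_act. rewrite qlift_cls by apply tr_act_rep_ok.
  unfold tr_act_rep; simpl. symmetry. apply cls_step.
  exists g; simpl. rewrite cmp_id_l, cmp_id_r. reflexivity.
Qed.

Definition alF : Functor (LinD (pword om)) (EX X).
Proof.
  refine (@Build_Functor (LinD (pword om)) (EX X)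
    (fun i => existT (ps X) (fob (pfun om) i) (xi i))
    (fun i j g => exist _ (fmap (pfun om) g) (xi_nat g)) _ _).
  - intros; apply sig_eq_pi; simpl; apply fmap_id.
  - intros; apply sig_eq_pi; simpl; exact (fmap_cmp (pfun om) _ _).
Defined.

Definition alD : DFunctor (LinD (pword om)) (EX X).
Proof.
  refine (@Build_DFunctor _ _ alF _ _); simpl; intros.
  - apply (dfun_fwd (pfun om)); assumption.
  - apply (dfun_bwd (pfun om)); assumption.
Defined.

Definition alP : Path (EX X) := {| pword := pword om; pfun := alD |}.
End S.

Section T.
Variables (C : DCat) (X : Automaton C) (alpha : Path (EX X)).

Definition trm_rep (U : ob C) (p : TrA (ppush alpha) U) : ps X U :=
  pact X (projT2 p) (projT2 (fob (pfun alpha) (projT1 p))).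

Lemma trm_rep_ok U : forall p q, @TrR C (ppush alpha) U p q -> trm_rep p = trm_rep q.
Proof.
  intros [i f] [j f'] [g Hg]; simpl in *. unfold trm_rep; simpl. subst f'.
  simpl. rewrite pact_cmp. f_equal. symmetry. exact (proj2_sig (fmap (pfun alpha) g)).
Qed.

Definition trm : PMap (track (ppush alpha)) X.
Proof.
  refine (@Build_PMap C (track_psh (ppush alpha)) X (fun U (q : TrT (ppush alpha) U) => qlift (@trm_rep U) q) _).
  intros U V f q. destruct (cls_surj q) as [[i h] ->].
  simpl. unfold tr_act. rewrite (qlift_cls (tr_act_rep_ok f)).
  unfold tr_act_rep. rewrite !(qlift_cls (@trm_rep_ok _)).
  unfold trm_rep; simpl. apply pact_cmp.
Defined.

Lemma trm_start U (y : ps (track (ppush alpha)) U) i :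
  existT (ps (track (ppush alpha))) U y = @tr_elt C (ppush alpha) i ->
  existT (ps X) U (pm trm U y) = fob (pfun alpha) i.
Proof.
  intro E. change (existT (ps X) U (qlift (@trm_rep U) y) = fob (pfun alpha) i).
  revert E. unfold tr_elt. intro E.
  pose proof (projT1_eq E) as E1. simpl in E1. subst U.
  pose proof (projT2_eq E) as E2. simpl in E2. rewrite <- eq_rect_eq in E2. subst y.
  rewrite (qlift_cls (@trm_rep_ok _)). unfold trm_rep; simpl. rewrite pact_id.
  clear E. symmetry. apply sigT_eta.
Qed.
End T.


Definition c1 (C : DCat) (om : Path C) U (x : ps (track om) U) : TrT om U := x.
Definition c2 (C : DCat) (om : Path C) U (x : TrT om U) : ps (track om) U := x.
Lemma pact_tr (C : DCat) (om : Path C) U V (g : @hom C V U) (x : ps (track om) U) :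
  pact (track om) g x = c2 (tr_act g (c1 x)).
Proof. reflexivity. Qed.

Section Z. Variables (C : DCat) (X G : Automaton C) (om : Path C) (f' : PMap (track om) G) (m : PMap G X).
Definition om2 := ppush (@alP C X G om f' m).
Strategy expand [om2 ppush dfcomp fcomp piX piF alP alD alF].
Definition up U (x : ps (track om) U) : ps (track om2) U := c2 (om:=om2) (c1 x).
Definition dn U (x : ps (track om2) U) : ps (track om) U := c2 (om:=om) (c1 x).
Lemma up_nat U V (g : @hom C V U) x : up (pact (track om) g x) = pact (track om2) g (up x).
Proof. rewrite !pact_tr. reflexivity. Qed.
Lemma dn_nat U V (g : @hom C V U) x : dn (pact (track om2) g x) = pact (track om) g (dn x).
Proof. rewrite !pact_tr. reflexivity. Qed.
Lemma dn_up U x : dn (up (U:=U) x) = x. Proof. reflexivity. Qed.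
Lemma up_dn U x : up (dn (U:=U) x) = x. Proof. reflexivity. Qed.
Lemma up_tr i : existT (ps (track om2)) (fob (pfun om) i) (up (projT2 (@tr_elt C om i))) = @tr_elt C om2 i.
Proof. reflexivity. Qed.
Lemma dn_tr i : existT (ps (track om)) (fob (pfun om) i) (dn (projT2 (@tr_elt C om2 i))) = @tr_elt C om i.
Proof. reflexivity. Qed.

Lemma dn_elt (h : PMap (track om) G) (i : ob (LinD (pword om))) (e : Elt (track om2)) :
  e = @tr_elt C om2 i ->
  existT (ps G) (projT1 e) (pm h _ (dn (projT2 e))) = pm_elt h (@tr_elt C om i).
Proof. intros ->. rewrite <- (dn_tr i). unfold pm_elt, tr_elt. cbn [projT1 projT2]. reflexivity. Qed.

Lemma iso2 (f : PMap G (track om)) : aiso G (track om) -> 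
  (forall e, astart (track om) e -> astart G (pm_elt f' e)) ->
  (forall e, aacc (track om) e -> aacc G (pm_elt f' e)) ->
  (forall U x, pm f' U (pm f U x) = x) -> (forall U y, pm f U (pm f' U y) = y) ->
  is_amorph f -> aiso G (track om2).
Proof.
  intros _ Hs' Ha' H1 H2 [Hs Ha].
  exists (@Build_PMap C G (track om2) (fun U x => up (pm f U x))
            (fun U V g x => eq_trans (f_equal (@up V) (pm_nat f g x)) (@up_nat U V g _))).
  exists (@Build_PMap C (track om2) G (fun U x => pm f' U (dn x))
            (fun U V g x => eq_trans (f_equal (pm f' V) (@dn_nat U V g x)) (pm_nat f' g _))).
  split; [|split; [|split]].
  - split; intros e He.
    + pose proof (Hs e He) as E. unfold pm_elt in *; simpl in *.
      change (astart (track om) (existT _ (projT1 e) (pm f (projT1 e) (projT2 e)))) in E.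
      simpl in E. change (existT (ps (track om2)) (projT1 e) (up (pm f (projT1 e) (projT2 e)))
         = @tr_elt C om2 (lbot (pword om2))).
      exact (eq_trans (f_equal (fun e' : Elt (track om) => existT (ps (track om2)) (projT1 e') (up (projT2 e'))) E) (up_tr _)).
    + pose proof (Ha e He) as E. unfold pm_elt in *; simpl in *.
      change (existT (ps (track om2)) (projT1 e) (up (pm f (projT1 e) (projT2 e)))
         = @tr_elt C om2 (ltop (pword om2))).
      exact (eq_trans (f_equal (fun e' : Elt (track om) => existT (ps (track om2)) (projT1 e') (up (projT2 e'))) E) (up_tr _)).
  - split; intros e He.
    + change (e = @tr_elt C om2 (lbot (pword om2))) in He.
      unfold pm_elt at 1. cbn [pm]. rewrite (dn_elt f' He). exact (Hs' _ eq_refl).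
    + change (e = @tr_elt C om2 (ltop (pword om2))) in He.
      unfold pm_elt at 1. cbn [pm]. rewrite (dn_elt f' He). exact (Ha' _ eq_refl).
  - intros U x; simpl. rewrite dn_up. apply H1.
  - intros U y; simpl. rewrite H2. apply up_dn.
Qed.
End Z.

Theorem corollary8 (C : DCat) (X : Automaton C) (G : Automaton C) :
  is_track_object G ->
  (Lang X G <->
   exists alpha : Path (EX X), accepting X alpha /\ aiso G (track (ppush alpha))).
Proof.
  intro HT. split.
  - intros [_ [m [Hs Ha]]]. destruct HT as [om [f [f' [Hf [Hf' [H1 H2]]]]]].
    exists (@alP C X G om f' m). split.
    + split.
      * exact (Hs (pm_elt f' (@tr_elt C om (lbot (pword om)))) (proj1 Hf' _ eq_refl)).
      * exact (Ha (pm_elt f' (@tr_elt C om (ltop (pword om)))) (proj2 Hf' _ eq_refl)).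
    + exact (@iso2 C X G om f' m f (ex_intro _ f (ex_intro _ f' (conj Hf (conj Hf' (conj H1 H2)))))
               (proj1 Hf') (proj2 Hf') H1 H2 Hf).
  - intros [alpha [[Hs Ha] Hiso]]. split; [exact HT|].
    destruct Hiso as [f [f' [Hf [Hf' [H1 H2]]]]].
    exists (@Build_PMap C G X (fun U x => pm (@trm C X alpha) U (pm f U x))
              (fun U V g x => eq_trans (f_equal (pm (@trm C X alpha) V) (pm_nat f g x))
                                          (pm_nat (@trm C X alpha) g (pm f U x)))).
    split; intros e He.
    + pose proof (proj1 Hf e He) as E. unfold pm_elt at 1. cbn [pm].
      change (existT (ps (track (ppush alpha))) (projT1 e) (pm f (projT1 e) (projT2 e)) = @tr_elt C (ppush alpha) (lbot (pword (ppush alpha)))) in E.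
      rewrite (@trm_start C X alpha _ _ _ E). exact Hs.
    + pose proof (proj2 Hf e He) as E. unfold pm_elt at 1. cbn [pm].
      change (existT (ps (track (ppush alpha))) (projT1 e) (pm f (projT1 e) (projT2 e)) = @tr_elt C (ppush alpha) (ltop (pword (ppush alpha)))) in E.
      rewrite (@trm_start C X alpha _ _ _ E). exact Ha.
Qed.
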